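(* For any function $f^*:\mathbb R\rightarrow\mathbb R$, any (nonempty) finite set $\mathcal X\subset\mathbb R$, and any compact interval $\mathcal{I} \subset\mathbb R$ containing $\mathcal X$, there exists a $\textsc{ReLU}$ network $f:\mathbb R\rightarrow\mathbb R$ of width $2$ such that $f(x)=f^*(x)$ for all $x\in\mathcal X$ and $f(\mathcal I)\subset\big[\min f^*(\mathcal X),\max f^*(\mathcal X)\big]$.
   Context: A $\textsc{ReLU}$ network is $t_L\circ\sigma_{L-1}\circ\cdots\circ\sigma_1\circ t_1$ with affine maps $t_\ell:\mathbb R^{d_{\ell-1}}\to\mathbb R^{d_\ell}$ and $\sigma_\ell$ the coordinatewise $\textsc{ReLU}$ $x\mapsto\max\{x,0\}$; its width is $\max\{d_1,\dots,d_{L-1}\}$ and its depth is arbitrary. *)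

(* Defs.v *)
From HB Require Import structures.
From mathcomp Require Import all_boot all_order all_algebra.
From mathcomp Require Import reals.
Set Implicit Arguments. Unset Strict Implicit. Unset Printing Implicit Defensive.
Import Order.TTheory GRing.Theory Num.Theory.
Local Open Scope ring_scope.

Section ReLUNet.
Variable R : realType.

(* A ReLU network t_L o sigma_{L-1} o ... o sigma_1 o t_1 from R^m to R^n.
   [Affine W b] is a single affine map x |-> W x + b (L = 1);
   [Layer W b N] is N o sigma o (x |-> W x + b), where the hidden layer
   has dimension k. *)
Inductive relu_net : nat -> nat -> Type :=
| Affine (m n : nat) (W : 'M[R]_(n, m)) (b : 'cV[R]_n) : relu_net m n
| Layer (m k n : nat) (W : 'M[R]_(k, m)) (b : 'cV[R]_k) (N : relu_net k n)
    : relu_net m n.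

Definition relu_vec (k : nat) (v : 'cV[R]_k) : 'cV[R]_k :=
  map_mx (fun t => Num.max t 0) v.

Fixpoint eval_net (m n : nat) (N : relu_net m n) : 'cV[R]_m -> 'cV[R]_n :=
  match N in relu_net m n return 'cV[R]_m -> 'cV[R]_n with
  | Affine _ _ W b => fun x => W *m x + b
  | Layer _ _ _ W b N' => fun x => eval_net N' (relu_vec (W *m x + b))
  end.

Fixpoint width (m n : nat) (N : relu_net m n) : nat :=
  match N with
  | Affine _ _ _ _ => 0%N
  | Layer _ k _ _ _ N' => maxn k (width N')
  end.

Definition net_fun (N : relu_net 1 1) (x : R) : R :=
  eval_net N (const_mx x) ord0 ord0.

End ReLUNet.

Definition seq_min (R : realType) (f : R -> R) (s : seq R) : R :=
  foldr (fun y acc => Num.min (f y) acc) (f (head 0 s)) s.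
Definition seq_max (R : realType) (f : R -> R) (s : seq R) : R :=
  foldr (fun y acc => Num.max (f y) acc) (f (head 0 s)) s.

(* Main.v *)
Require Import Defs.
From HB Require Import structures.
From mathcomp Require Import all_boot all_order all_algebra.
From mathcomp Require Import reals.
From mathcomp Require Import lra zify.
Import Order.TTheory GRing.Theory Num.Theory.
Local Open Scope ring_scope.

Section H.
Variable R : realType.

Lemma maxid0 (x : R) : 0 <= x -> Num.max x 0 = x.
Proof. by move=> h; rewrite max_l. Qed.
Lemma max0n (x : R) : x <= 0 -> Num.max x 0 = 0.
Proof. by move=> h; rewrite max_r. Qed.
Lemma max0ge (x : R) : 0 <= Num.max x 0 /\ x <= Num.max x 0.
Proof. by split; rewrite le_max lexx ?orbT. Qed.

Lemma foldr_min_le (f : R -> R) i s x : x \in s ->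
  foldr (fun y acc => Num.min (f y) acc) i s <= f x.
Proof.
elim: s => //= y s IH; rewrite in_cons => /orP [/eqP -> | hx].
  by rewrite ge_min lexx.
by rewrite ge_min IH ?orbT.
Qed.
Lemma foldr_min_le_i (f : R -> R) i s :
  foldr (fun y acc => Num.min (f y) acc) i s <= i.
Proof. by elim: s => //= y s IH; rewrite ge_min IH orbT. Qed.
Lemma foldr_min_mem (f : R -> R) i s :
  foldr (fun y acc => Num.min (f y) acc) i s = i \/
  exists2 x, x \in s & foldr (fun y acc => Num.min (f y) acc) i s = f x.
Proof.
elim: s => [|y s IH] /=; first by left.
rewrite minEle; case: ifP => _.
  by right; exists y; rewrite ?mem_head.
case: IH => [->|[x hx ->]]; first by left.
by right; exists x; rewrite // in_cons hx orbT.
Qed.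
Lemma foldr_max_ge (f : R -> R) i s x : x \in s ->
  f x <= foldr (fun y acc => Num.max (f y) acc) i s.
Proof.
elim: s => //= y s IH; rewrite in_cons => /orP [/eqP -> | hx].
  by rewrite le_max lexx.
by rewrite le_max IH ?orbT.
Qed.

Lemma seq_min_le (f : R -> R) s x : x \in s -> seq_min f s <= f x.
Proof. exact: foldr_min_le. Qed.
Lemma seq_max_ge (f : R -> R) s x : x \in s -> f x <= seq_max f s.
Proof. exact: foldr_max_ge. Qed.
Lemma seq_min_mem (f : R -> R) s : s != [::] -> exists2 x, x \in s & seq_min f s = f x.
Proof.
case: s => // y s _; rewrite /seq_min.
case: (foldr_min_mem f (f y) (y :: s)) => [->|//]; exists y => //; exact: mem_head.
Qed.

Definition vec2 (t A : R) : 'cV[R]_2 := \col_(i < 2) (if i == ord0 then t else A).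
Definition mk2 (p q r s : R) : 'M[R]_2 :=
  \matrix_(i < 2, j < 2) (if i == ord0 then (if j == ord0 then p else q)
                          else (if j == ord0 then r else s)).

Lemma mul2 p q r s t A u v :
  mk2 p q r s *m vec2 t A + vec2 u v = vec2 (p*t + q*A + u) (r*t + s*A + v).
Proof.
apply/matrixP => i j; rewrite !mxE big_ord_recl big_ord1 !mxE /=.
by case: i => [[|[|//]] Hi] /=.
Qed.

Lemma relu2 t A : relu_vec (vec2 t A) = vec2 (Num.max t 0) (Num.max A 0).
Proof. by apply/matrixP => i j; rewrite !mxE; case: ifP. Qed.

Lemma relu_const k (z : R) : relu_vec (const_mx z : 'cV[R]_k) = const_mx (Num.max z 0).
Proof. by apply/matrixP => i j; rewrite !mxE. Qed.

Lemma cV1_const (w : 'cV[R]_1) : w = const_mx (w ord0 ord0).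
Proof. by apply/matrixP => i j; rewrite !mxE !ord1. Qed.

Lemma aff1 (k z c : R) :
  (const_mx k : 'M[R]_(1,1)) *m (const_mx z : 'cV[R]_1) + const_mx c = const_mx (k * z + c).
Proof. by apply/matrixP => i j; rewrite !mxE big_ord1 !mxE. Qed.

Definition W1 : 'M[R]_(1,2) := \matrix_(i < 1, j < 2) (if j == ord0 then 0 else 1).
Lemma W1E t A : W1 *m vec2 t A + 0 = const_mx A.
Proof.
apply/matrixP => i j; rewrite !mxE big_ord_recl big_ord1 !mxE /=.
by rewrite mul0r add0r mul1r addr0.
Qed.

Definition W0 : 'M[R]_(2,1) := \matrix_(i < 2, j < 1) (if i == ord0 then 1 else 0).
Lemma W0E x c B : W0 *m const_mx x + vec2 c B = vec2 (x + c) B.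
Proof.
apply/matrixP => i j; rewrite !mxE big_ord1 !mxE.
by case: ifP => _; rewrite ?mul1r ?mul0r ?add0r.
Qed.


Definition clampnet (s lo hi : R) : relu_net R 1 1 :=
  Layer (const_mx 1 : 'M[R]_(1,1)) (const_mx (-(s + lo)))
   (Layer (const_mx (-1) : 'M[R]_(1,1)) (const_mx (hi - lo))
     (Affine (const_mx (-1) : 'M[R]_(1,1)) (const_mx hi))).

Lemma clamp_eval s lo hi z :
  eval_net (clampnet s lo hi) (const_mx z) ord0 ord0 =
  - Num.max (- Num.max (z - (s + lo)) 0 + (hi - lo)) 0 + hi.
Proof. by rewrite /= aff1 relu_const aff1 relu_const aff1 !mxE !mul1r !mulN1r. Qed.

Lemma clamp_range s lo hi z : lo <= hi ->
  lo <= eval_net (clampnet s lo hi) (const_mx z) ord0 ord0 <= hi.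
Proof.
move=> h; rewrite clamp_eval.
set p := Num.max (z - (s + lo)) 0.
have [hp _] := max0ge (z - (s + lo)); rewrite -/p in hp.
set q := Num.max _ 0.
have [hq _] := max0ge (- p + (hi - lo)); rewrite -/q in hq.
have hq2 : q <= hi - lo.
  case: (lerP 0 (- p + (hi - lo))) => hh.
    rewrite /q maxid0 //; lra.
  rewrite /q max0n; [lra | exact: ltW].
apply/andP; split; lra.
Qed.

Lemma clamp_in s lo hi z : lo <= z - s <= hi ->
  eval_net (clampnet s lo hi) (const_mx z) ord0 ord0 = z - s.
Proof.
move=> /andP [h1 h2]; rewrite clamp_eval (maxid0 (z - (s + lo))); last lra.
rewrite maxid0; lra.
Qed.

Lemma key_nil :
  exists B : R, 0 <= B /\ forall F : relu_net R 1 1, exists N : relu_net R 2 1,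
   (width N <= maxn 2 (width F))%N /\
   (forall v, exists z, eval_net N v = eval_net F (const_mx z)) /\
   (forall (y : R -> R) t A, y 0 = 0 -> t \in [:: 0] -> B <= A ->
      eval_net N (vec2 t A) = eval_net F (const_mx (A + y t))).
Proof.
exists 0; split => // F.
exists (Layer W1 0 F); split; first by rewrite /=; lia.
split.
  move=> v /=; exists (relu_vec (W1 *m v + 0) ord0 ord0).
  by rewrite -cV1_const.
move=> y t A hy; rewrite inE => /eqP -> hA /=.
by rewrite W1E relu_const maxid0 // hy addr0.
Qed.

Lemma key (n : nat) (T : seq R) (y : R -> R) :
  (size T <= n)%N -> all (fun t => 0 < t) T -> y 0 = 0 ->
  exists B : R, 0 <= B /\ forall F : relu_net R 1 1, exists N : relu_net R 2 1,
   (width N <= maxn 2 (width F))%N /\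
   (forall v, exists z, eval_net N v = eval_net F (const_mx z)) /\
   (forall t A, t \in 0 :: T -> B <= A ->
      eval_net N (vec2 t A) = eval_net F (const_mx (A + y t))).
Proof.
elim: n T y => [|n IH] T y hs hpos hy0.
  case: T hs hpos => // _ _.
  have [B [hB HB]] := key_nil; exists B; split => // F.
  have [N [h1 [h2 h3]]] := HB F; exists N; do 2!split => //.
  by move=> t A; apply: h3.
case: T hs hpos => [|x0 T0] hs hpos.
  have [B [hB HB]] := key_nil; exists B; split => // F.
  have [N [h1 [h2 h3]]] := HB F; exists N; do 2!split => //.
  by move=> t A; apply: h3.
set T := x0 :: T0.
have hpos' : forall t, t \in T -> 0 < t by move=> t ht; apply: (allP hpos).
have [m hmT hmE] := @seq_min_mem id T isT.
have hmle : forall t, t \in T -> m <= t.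
  by move=> t ht; rewrite -hmE; apply: (seq_min_le id).
have hm0 : 0 < m by apply: hpos'.
set Mx := seq_max id T.
have hMx : forall t, t \in T -> t <= Mx by move=> t ht; apply: (seq_max_ge id).
have hMm : m <= Mx by apply: hMx.
set sg := y m / m.
have hsg : sg * m = y m by rewrite /sg divfK // gt_eqF.
set T' := [seq t - m | t <- T & m < t].
set y' := fun s => y (s + m) - sg * (s + m).
have hy'0 : y' 0 = 0 by rewrite /y' add0r hsg subrr.
have hsT' : (size T' <= n)%N.
  rewrite size_map size_filter.
  have : (count (fun t => (m < t)%R) T < size T)%N.
    rewrite -(count_predC (fun t => (m < t)%R) T) -addn1 leq_add2l.
    rewrite -has_count; apply/hasP; exists m => //=; by rewrite ltxx.
  by move: hs => /=; lia.
have hposT' : all (fun t => 0 < t) T'.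
  apply/allP => u /mapP [t]; rewrite mem_filter => /andP [h _] ->; lra.
have [B' [hB' HB']] := IH T' y' hsT' hposT' hy'0.
exists (B' + `|sg| * Mx); split.
  have := normr_ge0 sg; nra.
move=> F; have [N' [h1 [h2 h3]]] := HB' F.
exists (Layer (mk2 1 0 sg 1) (vec2 (-m) 0) N'); split.
  by rewrite /=; lia.
split.
  by move=> v /=; apply: h2.
move=> t A ht hA /=.
have ht0 : 0 <= t /\ t <= Mx.
  move: ht; rewrite inE => /orP [/eqP -> | ht]; first by split; lra.
  by split; [apply: ltW; apply: hpos' | apply: hMx].
have hsgt : - (`|sg| * Mx) <= sg * t.
  have := ler_norm sg; have := ler_norm (- sg); rewrite normrN.
  have := normr_ge0 sg; nra.
rewrite mul2 relu2 !mul1r !mul0r !addr0 (maxid0 (sg * t + A)); last lra.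
have hA' : B' <= sg * t + A by lra.
move: ht; rewrite inE => /orP [/eqP htz | ht].
  subst t; rewrite add0r max0n; last lra.
  rewrite h3 ?mem_head //; apply: (congr1 (fun z => eval_net F (const_mx z))).
  by rewrite hy'0 hy0 mulr0 add0r !addr0.
have := hmle t ht; rewrite le_eqVlt => /orP [/eqP hmt | hmt].
  subst t; rewrite subrr maxid0 // (h3 0 _ (mem_head _ _) hA'); apply: (congr1 (fun z => eval_net F (const_mx z))).
  by rewrite hy'0 addr0 hsg addrC.
rewrite maxid0; last lra.
rewrite (h3 (t - m) _ _ hA'); last first.
  by rewrite inE; apply/orP; right; apply/mapP; exists t; rewrite // mem_filter hmt.
apply: (congr1 (fun z => eval_net F (const_mx z))); rewrite /y' subrK; lra.
Qed.

End H.
Arguments seq_min_le {R}.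
Arguments seq_max_ge {R}.
Arguments seq_min_mem {R}.
Arguments key {R}.
Arguments clamp_in {R}.
Arguments clamp_range {R}.
Arguments W0E {R}.
Arguments maxid0 {R}.
Arguments relu2 {R}.
Arguments vec2 {R}.
Arguments mk2 {R}.
Arguments clampnet {R}.

Theorem lemma5 (R : realType) (fstar : R -> R) (X : seq R) (a b : R) :
  X != [::] -> a <= b -> (forall x, x \in X -> a <= x <= b) ->
  exists N : relu_net R 1 1,
    width N = 2%N /\
    (forall x, x \in X -> net_fun N x = fstar x) /\
    (forall x, a <= x <= b ->
       seq_min fstar X <= net_fun N x <= seq_max fstar X).
Proof.
move=> hX hab hXab.
set lo := seq_min fstar X; set hi := seq_max fstar X.
have [x1 hx1 _] := seq_min_mem fstar X hX.
have hlohi : lo <= hi := le_trans (seq_min_le fstar X x1 hx1) (seq_max_ge fstar X x1 hx1).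
set c := seq_min id X - 1.
have hc : forall x, x \in X -> c < x.
  by move=> x hx; have := seq_min_le id X x hx; rewrite /c /=; lra.
set T := [seq x - c | x <- X].
set y := fun t : R => if t == 0 then 0 else fstar (t + c).
have hposT : all (fun t => 0 < t) T.
  by apply/allP => t /mapP [x hx ->]; have := hc x hx; lra.
have hy0 : y 0 = 0 by rewrite /y eqxx.
have [B [hB HB]] := key (size T) T y (leqnn (size T)) hposT hy0.
have [N [hw [hr hv]]] := HB (clampnet B lo hi).
exists (Layer (W0 R) (vec2 (-c) B) N); split; [| split].
- by move: hw => /=; lia.
- move=> x hx; rewrite /net_fun /= W0E relu2 (maxid0 B) // maxid0; last first.
    by have := hc x hx; lra.
  rewrite (hv (x + - c) B) ?lexx //; last first.
    by rewrite inE; apply/orP; right; apply/mapP; exists x.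
  have hxc : x + - c != 0.
    by rewrite subr_eq0; have := hc x hx; rewrite lt_def eq_sym => /andP [].
  have hBB : B + fstar x - B = fstar x by rewrite addrC addKr.
  rewrite /y (negbTE hxc) addrNK clamp_in hBB //.
  by apply/andP; split; [apply: seq_min_le | apply: seq_max_ge].
- move=> x _; rewrite /net_fun /=.
  have [z ->] := hr (relu_vec (W0 R *m const_mx x + vec2 (- c) B)).
  exact: clamp_range.
Qed.
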